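(* Let $\{q_k:k\ge0\}$ be a non-decreasing sequence of nonnegative numbers with $q_0>0$. There is a constant $c>0$ such that for all $N\in\mathbb N$, all $n\ge M_N$, all $0\le k\le N-1$, $k+1\le l\le N$ and all $x\in I_N^{k,l}$, $$\int_{I_N}\left|\frac1{Q_n}\sum_{j=M_N}^{n}q_{n-j}D_j(x-t)\right|d\mu(t)\le\frac{cM_lM_k}{M_N^2}.$$
   Context: Let $m=(m_0,m_1,\dots)$ be a bounded sequence of integers $m_k\ge 2$; $G_m=\prod_k Z_{m_k}$ (compact abelian group under coordinatewise addition mod $m_k$) with Haar probability measure $\mu$; $M_0=1$, $M_{k+1}=m_kM_k$, $n=\sum_j n_jM_j$ with $n_j\in Z_{m_j}$. $I_N=\{x: x_0=\dots=x_{N-1}=0\}$. For $0\le k<l<N$, $I_N^{k,l}$ is the set of $x\in G_m$ with $x_0=\dots=x_{k-1}=0$, $x_k\ne0$, $x_{k+1}=\dots=x_{l-1}=0$, $x_l\ne0$ (other coordinates arbitrary); for $0\le k<N$, $I_N^{k,N}$ is the set of $x$ with $x_0=\dots=x_{k-1}=0$, $x_k\ne 0$, $x_{k+1}=\dots=x_{N-1}=0$. $r_k(x)=\exp(2\pi i x_k/m_k)$, $\psi_n=\prod_k r_k^{n_k}$, $D_n=\sum_{k=0}^{n-1}\psi_k$, $Q_n=\sum_{k=0}^{n-1}q_k$. *)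

(* Defs.v *)
From Stdlib Require Import Reals Arith List.
Open Scope R_scope.

Fixpoint sumR (f : nat -> R) (n : nat) : R :=
  match n with
  | O => 0
  | S n' => sumR f n' + f n'
  end.

Fixpoint Mk (m : nat -> nat) (k : nat) : nat :=
  match k with
  | O => 1%nat
  | S k' => (m k' * Mk m k')%nat
  end.

Definition digit (m : nat -> nat) (n j : nat) : nat :=
  ((n / Mk m j) mod m j)%nat.

(* elements of G_m are represented as x : nat -> nat with x k < m k *)
Definition inG (m : nat -> nat) (x : nat -> nat) : Prop :=
  forall k, (x k < m k)%nat.

(* x - t in G_m (coordinatewise mod m_k), for t in G_m *)
Definition gsub (m : nat -> nat) (x t : nat -> nat) : nat -> nat :=
  fun k => ((x k + (m k - t k)) mod m k)%nat.

(* psi_n(z) = prod_k r_k(z)^{n_k} = exp(i * psi_arg n z); digits n_k vanish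
   for k >= n (since M_k >= 2^k > n), so the sum over k <= n is the full sum *)
Definition psi_arg (m : nat -> nat) (n : nat) (z : nat -> nat) : R :=
  2 * PI * sumR (fun k => INR (digit m n k * z k) / INR (m k)) (S n).

(* real and imaginary parts of D_n(z) = sum_{i<n} psi_i(z) *)
Definition D_re (m : nat -> nat) (n : nat) (z : nat -> nat) : R :=
  sumR (fun i => cos (psi_arg m i z)) n.
Definition D_im (m : nat -> nat) (n : nat) (z : nat -> nat) : R :=
  sumR (fun i => sin (psi_arg m i z)) n.

Definition Qn (q : nat -> R) (n : nat) : R := sumR q n.

Definition sum_from_to (f : nat -> R) (a b : nat) : R :=
  sumR (fun i => f (a + i)%nat) (S b - a).

Definition K_re (m : nat -> nat) (q : nat -> R) (N n : nat) (z : nat -> nat) : R :=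
  / Qn q n * sum_from_to (fun j => q (n - j)%nat * D_re m j z) (Mk m N) n.
Definition K_im (m : nat -> nat) (q : nat -> R) (N n : nat) (z : nat -> nat) : R :=
  / Qn q n * sum_from_to (fun j => q (n - j)%nat * D_im m j z) (Mk m N) n.

Definition cabs (re im : R) : R := sqrt (re * re + im * im).

Definition inIN (N : nat) (t : nat -> nat) : bool :=
  forallb (fun j => Nat.eqb (t j) 0) (seq 0 N).

(* Haar integral of a function depending only on the coordinates < K:
   int_{G_m} f dmu = (1/M_K) sum over (t_0,...,t_{K-1}) of f(t),
   the tuples being enumerated by s < M_K through their digits. *)
Definition haar_int_cyl (m : nat -> nat) (K : nat) (f : (nat -> nat) -> R) : R :=
  / INR (Mk m K) * sumR (fun s => f (fun k => digit m s k)) (Mk m K).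

Definition in_INkl (N k l : nat) (x : nat -> nat) : Prop :=
  (forall j, (j < k)%nat -> x j = 0%nat) /\ x k <> 0%nat /\
  (forall j, (k < j)%nat -> (j < l)%nat -> x j = 0%nat) /\
  (if Nat.ltb l N then x l <> 0%nat else True).

(* Main.v *)
Require Import Defs.
From Stdlib Require Import Reals Arith List Lra Lia.
From Coquelicot Require Import Coquelicot.
Open Scope R_scope.
Definition cexp (th : R) : C := (cos th, sin th).
Fixpoint csum (f : nat -> C) (n : nat) : C :=
  match n with O => (RtoC 0) | S n' => (csum f n' + f n')%C end.

Lemma cexp_add a b : cexp (a + b) = (cexp a * cexp b)%C.
Proof. unfold cexp, Cmult; simpl. rewrite cos_plus, sin_plus. f_equal; ring. Qed.

Lemma Cmod_cexp t : Cmod (cexp t) = 1.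
Proof. unfold Cmod, cexp; simpl. pose proof (sin2_cos2 t). unfold Rsqr in H.
  replace (cos t * (cos t * 1) + sin t * (sin t * 1)) with 1 by lra. apply sqrt_1. Qed.

Lemma csum_ext f g n : (forall i, (i < n)%nat -> f i = g i) -> csum f n = csum g n.
Proof. induction n; simpl; intros; auto. rewrite IHn by (intros; apply H; lia). rewrite H by lia; auto. Qed.

Lemma csum_split f a b : csum f (a + b) = (csum f a + csum (fun i => f (a + i)%nat) b)%C.
Proof. induction b; simpl. rewrite Nat.add_0_r. ring.
  rewrite Nat.add_succ_r; simpl. rewrite IHb. ring. Qed.

Lemma csum_scal c f n : csum (fun i => c * f i)%C n = (c * csum f n)%C.
Proof. induction n; simpl. ring. rewrite IHn. ring. Qed.

Lemma csum_scal_r c f n : csum (fun i => f i * c)%C n = (csum f n * c)%C.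
Proof. induction n; simpl. ring. rewrite IHn. ring. Qed.

Lemma csum_zero (f : nat -> C) n : (forall i, (i < n)%nat -> f i = (RtoC 0)) -> csum f n = (RtoC 0).
Proof. induction n; simpl; intros; auto. rewrite IHn by (intros; apply H; lia). rewrite H by lia. ring. Qed.

Lemma Cmod_csum_le f n c : (forall i, (i < n)%nat -> Cmod (f i) <= c) -> Cmod (csum f n) <= INR n * c.
Proof. induction n; intros. simpl; rewrite Cmod_0; lra. cbn [csum].
  eapply Rle_trans. apply Cmod_triangle. rewrite S_INR.
  assert (Cmod (csum f n) <= INR n * c) by (apply IHn; intros; apply H; lia).
  assert (Cmod (f n) <= c) by (apply H; lia). lra. Qed.

Lemma csum_block f M b r :
  csum f (b * M + r) = (csum (fun c => csum (fun s => f (c * M + s)%nat) M) b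
                        + csum (fun s => f (b * M + s)%nat) r)%C.
Proof. rewrite csum_split. f_equal. induction b; simpl. auto.
  replace (M + b * M)%nat with (b * M + M)%nat by lia. rewrite csum_split, IHb. auto. Qed.
Lemma Mk_pos m (hm : forall k, (2 <= m k)%nat) k : (0 < Mk m k)%nat.
Proof. induction k; simpl; auto. specialize (hm k). nia. Qed.

Lemma Mk_gt m (hm : forall k, (2 <= m k)%nat) k : (k < Mk m k)%nat.
Proof. induction k; simpl; auto. specialize (hm k). nia. Qed.

Lemma Mk_split m k j : exists P, Mk m (k + j) = (Mk m k * P)%nat.
Proof. induction j. exists 1%nat. rewrite Nat.add_0_r; lia.
  destruct IHj as [P HP]. exists (m (k+j) * P)%nat. rewrite Nat.add_succ_r. simpl. rewrite HP. lia. Qed.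

Lemma Mk_split_le m k L : (k <= L)%nat -> exists P, Mk m L = (Mk m k * P)%nat.
Proof. intros. replace L with (k + (L - k))%nat by lia. apply Mk_split. Qed.

Lemma Mk_split_lt m k L : (k < L)%nat -> exists P, Mk m L = (Mk m k * m k * P)%nat.
Proof. intros. destruct (Mk_split_le m (S k) L) as [P HP]; [lia|]. exists P. rewrite HP. simpl. lia. Qed.

Lemma digit_small m i k : (i < Mk m k)%nat -> digit m i k = 0%nat.
Proof. intros. unfold digit. rewrite Nat.div_small by auto. apply Nat.Div0.mod_0_l. Qed.

Lemma digit_add m (hm : forall k, (2 <= m k)%nat) c L s k : (s < Mk m L)%nat ->
  digit m (c * Mk m L + s) k = (digit m (c * Mk m L) k + digit m s k)%nat.
Proof. intros Hs. pose proof (Mk_pos m hm k) as Hk. pose proof (Mk_pos m hm L) as HL.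
  pose proof (hm k) as hmk.
  destruct (Nat.lt_ge_cases k L) as [Hlt|Hge].
  - destruct (Mk_split_lt m k L Hlt) as [P HP]. unfold digit. rewrite HP.
    replace (c * (Mk m k * m k * P) + s)%nat with ((c * m k * P) * Mk m k + s)%nat by ring.
    replace (c * (Mk m k * m k * P))%nat with ((c * m k * P) * Mk m k)%nat by ring.
    rewrite Nat.div_add_l by lia. rewrite Nat.div_mul by lia.
    replace (c * m k * P + s / Mk m k)%nat with (s / Mk m k + (c*P) * m k)%nat by ring.
    rewrite Nat.Div0.mod_add. replace (c * m k * P)%nat with ((c * P) * m k)%nat by ring.
    rewrite Nat.Div0.mod_mul. lia.
  - destruct (Mk_split_le m L k Hge) as [P HP].
    assert (P <> 0%nat) by (intro; subst; rewrite Nat.mul_0_r in HP; lia).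
    rewrite (digit_small m s k) by nia. unfold digit. rewrite HP.
    rewrite <- !Nat.Div0.div_div. rewrite Nat.div_add_l by lia. rewrite Nat.div_mul by lia.
    rewrite (Nat.div_small s) by lia. rewrite Nat.add_0_r. lia. Qed.

Lemma digit_dM m (hm : forall k, (2 <= m k)%nat) d L k : (d < m L)%nat ->
  digit m (d * Mk m L) k = if Nat.eqb k L then d else 0%nat.
Proof. intros Hd. pose proof (Mk_pos m hm k) as Hk. pose proof (Mk_pos m hm L) as HL.
  destruct (Nat.lt_trichotomy k L) as [Hlt|[Heq|Hgt]].
  - replace (Nat.eqb k L) with false by (symmetry; apply Nat.eqb_neq; lia).
    replace (d * Mk m L)%nat with (d * Mk m L + 0)%nat by lia.
    rewrite digit_add by (auto; lia). rewrite digit_small with (i := 0%nat) by lia.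
    destruct (Mk_split_lt m k L Hlt) as [P HP]. unfold digit. rewrite HP.
    replace (d * (Mk m k * m k * P))%nat with ((d * P * m k) * Mk m k)%nat by ring.
    rewrite Nat.div_mul by lia. rewrite Nat.Div0.mod_mul. lia.
  - subst. rewrite Nat.eqb_refl. unfold digit. rewrite Nat.div_mul by lia. apply Nat.mod_small; auto.
  - replace (Nat.eqb k L) with false by (symmetry; apply Nat.eqb_neq; lia).
    apply digit_small. destruct (Mk_split_le m (S L) k) as [P HP]; [lia|].
    rewrite HP. simpl. assert (P <> 0%nat) by (intro; subst; rewrite Nat.mul_0_r in HP; lia).
    assert (d * Mk m L < m L * Mk m L)%nat by nia. nia. Qed.

Lemma sumR_ext f g n : (forall i, (i < n)%nat -> f i = g i) -> sumR f n = sumR g n.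
Proof. induction n; simpl; intros; auto. rewrite IHn by (intros; apply H; lia). rewrite H by lia; auto. Qed.

Lemma sumR_plus f g n : sumR (fun k => f k + g k) n = sumR f n + sumR g n.
Proof. induction n; simpl. lra. rewrite IHn. lra. Qed.

Lemma sumR_tail f K1 K2 : (forall k, (K1 <= k)%nat -> f k = 0) -> (K1 <= K2)%nat -> sumR f K2 = sumR f K1.
Proof. intros H. induction K2; intros. replace K1 with 0%nat by lia. auto.
  destruct (Nat.eq_dec K1 (S K2)). subst; auto. simpl. rewrite IHK2 by lia. rewrite H by lia. lra. Qed.

Lemma sumR_single f L K : (forall k, k <> L -> f k = 0) -> (L < K)%nat -> sumR f K = f L.
Proof. intros H. induction K; intros. lia. simpl. destruct (Nat.eq_dec K L).
  - subst. rewrite (sumR_ext f (fun _ => 0)). 2: { intros; apply H; lia. }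
    clear. assert (sumR (fun _ => 0) L = 0) by (induction L; simpl; lra). lra.
  - rewrite IHK by lia. rewrite (H K) by auto. lra. Qed.

Definition term (m : nat -> nat) (i : nat) (z : nat -> nat) (k : nat) : R :=
  INR (digit m i k * z k) / INR (m k).

Lemma psi_arg_K m (hm : forall k, (2 <= m k)%nat) i z K : (S i <= K)%nat ->
  psi_arg m i z = 2 * PI * sumR (term m i z) K.
Proof. intros. unfold psi_arg. f_equal. symmetry. apply sumR_tail; auto.
  intros. unfold term. rewrite digit_small. simpl. unfold Rdiv; try ring.
  pose proof (Mk_gt m hm k). lia. Qed.

Lemma psi_arg_add m (hm : forall k, (2 <= m k)%nat) c L s z : (s < Mk m L)%nat ->
  psi_arg m (c * Mk m L + s) z = psi_arg m (c * Mk m L) z + psi_arg m s z.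
Proof. intros Hs. set (K := S (c * Mk m L + s)).
  rewrite !(psi_arg_K m hm _ z K) by (unfold K; lia).
  rewrite <- Rmult_plus_distr_l, <- sumR_plus. f_equal. apply sumR_ext. intros k _.
  unfold term. rewrite digit_add by auto. rewrite !mult_INR, plus_INR.
  assert (INR (m k) <> 0) by (apply not_0_INR; specialize (hm k); lia). field; auto. Qed.

Lemma psi_arg_dM m (hm : forall k, (2 <= m k)%nat) d L z : (d < m L)%nat ->
  psi_arg m (d * Mk m L) z = 2 * PI * (INR d * INR (z L) / INR (m L)).
Proof. intros Hd. rewrite (psi_arg_K m hm _ z (S (d * Mk m L) + S L)) by lia. f_equal.
  rewrite (sumR_single _ L). unfold term. rewrite digit_dM by auto. rewrite Nat.eqb_refl.
  rewrite mult_INR. auto.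
  intros k Hk. unfold term. rewrite digit_dM by auto.
  replace (Nat.eqb k L) with false by (symmetry; apply Nat.eqb_neq; lia). simpl. unfold Rdiv; ring.
  lia. Qed.

Definition psi m i z := cexp (psi_arg m i z).
Definition Dc m n z := csum (fun i => psi m i z) n.

Lemma psi_add m (hm : forall k, (2 <= m k)%nat) c L s z : (s < Mk m L)%nat ->
  psi m (c * Mk m L + s) z = (psi m (c * Mk m L) z * psi m s z)%C.
Proof. intros. unfold psi. rewrite psi_arg_add by auto. apply cexp_add. Qed.

Lemma Cmod_psi m i z : Cmod (psi m i z) = 1.
Proof. apply Cmod_cexp. Qed.

Lemma geom th n : (csum (fun d => cexp (INR d * th)) n * (cexp th - 1))%C = (cexp (INR n * th) - 1)%C.
Proof. induction n. simpl. unfold cexp. rewrite Rmult_0_l, cos_0, sin_0. simpl.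
  apply injective_projections; simpl; ring.
  cbn [csum]. rewrite Cmult_plus_distr_r, IHn. rewrite S_INR.
  replace ((INR n + 1) * th) with (INR n * th + th) by ring. rewrite cexp_add. ring. Qed.

Lemma cos_lt_1 th : 0 < th -> th < 2 * PI -> cos th < 1.
Proof. intros. replace th with (2 * (th/2)) by field. rewrite cos_2a_sin.
  assert (0 < sin (th/2)) by (apply sin_gt_0; lra). nra. Qed.

Lemma geo_zero m (hm : forall k, (2 <= m k)%nat) L z : (0 < z L < m L)%nat ->
  csum (fun d => psi m (d * Mk m L) z) (m L) = (RtoC 0).
Proof. intros [H1 H2]. set (th := 2 * PI * INR (z L) / INR (m L)).
  assert (Hm : 0 < INR (m L)) by (apply lt_0_INR; lia).
  assert (Hz : 0 < INR (z L)) by (apply lt_0_INR; lia).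
  assert (Hzm : INR (z L) < INR (m L)) by (apply lt_INR; lia).
  rewrite (csum_ext _ (fun d => cexp (INR d * th))).
  2: { intros. unfold psi. rewrite psi_arg_dM by auto. f_equal. unfold th. field. lra. }
  assert (Hw : (cexp th - 1)%C <> (RtoC 0)).
  { intro E. assert (fst (cexp th - 1)%C = 0) by (rewrite E; auto).
    simpl in H. assert (cos th < 1). apply cos_lt_1; unfold th.
    apply Rdiv_lt_0_compat; [|lra]. pose proof PI_RGT_0. nra.
    apply (Rmult_lt_reg_r (INR (m L))); auto. unfold Rdiv. rewrite Rmult_assoc, Rinv_l by lra.
    pose proof PI_RGT_0. nra. lra. }
  pose proof (geom th (m L)) as G.
  replace (cexp (INR (m L) * th)) with (RtoC 1) in G.
  2: { unfold th. replace (INR (m L) * (2 * PI * INR (z L) / INR (m L))) with (0 + 2 * INR (z L) * PI) by (field; lra).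
       unfold cexp. rewrite cos_period, sin_period, cos_0, sin_0. auto. }
  replace (RtoC 1 - 1)%C with (RtoC 0) in G by (apply injective_projections; simpl; ring).
  remember (csum (fun d => cexp (INR d * th)) (m L)) as S0.
  transitivity (S0 * (cexp th - 1) * / (cexp th - 1))%C.
  rewrite <- Cmult_assoc, Cinv_r by auto. ring. rewrite G. ring. Qed.

Lemma D_MS m (hm : forall k, (2 <= m k)%nat) L z :
  Dc m (Mk m (S L)) z = (csum (fun d => psi m (d * Mk m L) z) (m L) * Dc m (Mk m L) z)%C.
Proof. unfold Dc. replace (Mk m (S L)) with (m L * Mk m L + 0)%nat by (simpl; lia).
  rewrite csum_block. simpl csum at 2. rewrite Cplus_0_r. rewrite <- csum_scal_r.
  apply csum_ext. intros d Hd. rewrite <- csum_scal. apply csum_ext. intros s Hs.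
  apply psi_add; auto. Qed.

Lemma D_M_zero m (hm : forall k, (2 <= m k)%nat) k z : (0 < z k < m k)%nat ->
  forall L, (k < L)%nat -> Dc m (Mk m L) z = (RtoC 0).
Proof. intros Hz L. induction L; intros. lia.
  rewrite D_MS by auto. destruct (Nat.eq_dec k L).
  - subst. rewrite geo_zero by auto. ring.
  - rewrite IHL by lia. ring. Qed.

Lemma D_shift m (hm : forall k, (2 <= m k)%nat) L z b r :
  Dc m (Mk m L) z = (RtoC 0) -> (r <= Mk m L)%nat ->
  Dc m (b * Mk m L + r) z = (psi m (b * Mk m L) z * Dc m r z)%C.
Proof. intros H0 Hr. unfold Dc at 1. rewrite csum_block.
  rewrite (csum_zero (fun c => csum (fun s => psi m (c * Mk m L + s) z) (Mk m L)) b).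
  rewrite Cplus_0_l. unfold Dc. rewrite <- csum_scal. apply csum_ext. intros. apply psi_add; auto; lia.
  intros c Hc. rewrite (csum_ext _ (fun s => psi m (c * Mk m L) z * psi m s z)%C).
  rewrite csum_scal. fold (Dc m (Mk m L) z). rewrite H0. ring.
  intros. apply psi_add; auto. Qed.

Lemma D_bound m (hm : forall k, (2 <= m k)%nat) k z : (0 < z k < m k)%nat ->
  forall r, Cmod (Dc m r z) <= INR (m k) * INR (Mk m k).
Proof. intros Hz r. pose proof (Mk_pos m hm (S k)) as HP.
  rewrite (Nat.div_mod r (Mk m (S k))) by lia.
  set (b := (r / Mk m (S k))%nat). set (r' := (r mod Mk m (S k))%nat).
  assert (r' < Mk m (S k))%nat by (apply Nat.mod_upper_bound; lia).
  replace (Mk m (S k) * b + r')%nat with (b * Mk m (S k) + r')%nat by ring.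
  rewrite (D_shift m hm (S k) z b r'); [| apply (D_M_zero m hm k); auto | lia].
  rewrite Cmod_mult, Cmod_psi, Rmult_1_l. unfold Dc.
  eapply Rle_trans. apply (Cmod_csum_le _ _ 1). intros; rewrite Cmod_psi; lra.
  rewrite <- mult_INR. rewrite Rmult_1_r. apply le_INR. simpl in H. lia. Qed.

Lemma S_bound m (hm : forall k, (2 <= m k)%nat) l z : (0 < z l < m l)%nat ->
  forall beta, Cmod (csum (fun b => psi m (b * Mk m l) z) beta) <= INR (m l).
Proof. intros Hz beta. assert (Hml : (m l <> 0)%nat) by (specialize (hm l); lia).
  rewrite (Nat.div_mod beta (m l)) by auto.
  set (b1 := (beta / m l)%nat). set (b0 := (beta mod m l)%nat).
  assert (b0 < m l)%nat by (apply Nat.mod_upper_bound; lia).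
  replace (m l * b1 + b0)%nat with (b1 * m l + b0)%nat by ring.
  rewrite csum_block.
  rewrite (csum_zero (fun c => csum (fun d => psi m ((c * m l + d) * Mk m l) z) (m l)) b1).
  rewrite Cplus_0_l.
  eapply Rle_trans. apply (Cmod_csum_le _ _ 1). intros; rewrite Cmod_psi; lra.
  rewrite Rmult_1_r. apply le_INR. lia.
  intros c Hc. rewrite (csum_ext _ (fun d => psi m (c * Mk m (S l)) z * psi m (d * Mk m l) z)%C).
  rewrite csum_scal. rewrite geo_zero by auto. ring.
  intros d Hd. pose proof (Mk_pos m hm l). rewrite <- psi_add by (auto; simpl; nia). f_equal. simpl. ring. Qed.

Lemma F_bound m (hm : forall k, (2 <= m k)%nat) B (hB : forall k, (m k <= B)%nat)
  N k l z : (k < l)%nat -> (l <= N)%nat -> (0 < z k < m k)%nat ->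
  ((l < N)%nat -> (0 < z l < m l)%nat) ->
  forall p, (p <= Mk m N)%nat ->
  Cmod (csum (fun r => Dc m r z) p) <= (INR B * INR B + INR B) * INR (Mk m l) * INR (Mk m k).
Proof. intros Hkl HlN Hzk Hzl p Hp. pose proof (Mk_pos m hm l) as Hl.
  assert (HB2 : (2 <= B)%nat) by (specialize (hm 0%nat); specialize (hB 0%nat); lia).
  assert (HD0 : Dc m (Mk m l) z = RtoC 0) by (apply (D_M_zero m hm k); auto).
  rewrite (Nat.div_mod p (Mk m l)) by lia.
  set (be := (p / Mk m l)%nat). set (p' := (p mod Mk m l)%nat).
  assert (Hp' : (p' < Mk m l)%nat) by (apply Nat.mod_upper_bound; lia).
  replace (Mk m l * be + p')%nat with (be * Mk m l + p')%nat by ring.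
  rewrite csum_block.
  rewrite (csum_ext (fun c => csum (fun s => Dc m (c * Mk m l + s) z) (Mk m l))
            (fun c => psi m (c * Mk m l) z * csum (fun s => Dc m s z) (Mk m l))%C).
  2: { intros c _. rewrite <- csum_scal. apply csum_ext. intros. apply D_shift; auto; lia. }
  rewrite csum_scal_r.
  rewrite (csum_ext (fun s => Dc m (be * Mk m l + s) z) (fun s => psi m (be * Mk m l) z * Dc m s z)%C).
  2: { intros. apply D_shift; auto; lia. }
  rewrite csum_scal.
  set (X := INR (Mk m l) * (INR B * INR (Mk m k))).
  assert (HDb : forall r, Cmod (Dc m r z) <= INR B * INR (Mk m k)).
  { intros. eapply Rle_trans. apply (D_bound m hm k); auto. apply Rmult_le_compat_r. apply pos_INR.
    apply le_INR; auto. }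
  assert (HG : Cmod (csum (fun s => Dc m s z) (Mk m l)) <= X).
  { apply Cmod_csum_le. intros; auto. }
  assert (HH : Cmod (csum (fun s => Dc m s z) p') <= X).
  { eapply Rle_trans. apply Cmod_csum_le. intros; apply HDb. unfold X. apply Rmult_le_compat_r.
    apply Rmult_le_pos; apply pos_INR. apply le_INR; lia. }
  assert (HS : Cmod (csum (fun b => psi m (b * Mk m l) z) be) <= INR B).
  { destruct (Nat.lt_ge_cases l N).
    - eapply Rle_trans. apply S_bound; auto. apply le_INR; auto.
    - assert (l = N) by lia. subst l.
      assert (be <= 1)%nat.
      { unfold be. destruct (Nat.le_gt_cases (p / Mk m N) 1); auto.
        pose proof (Nat.div_mod p (Mk m N)). nia. }
      eapply Rle_trans. apply (Cmod_csum_le _ _ 1). intros; rewrite Cmod_psi; lra.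
      rewrite Rmult_1_r. apply le_INR. lia. }
  eapply Rle_trans. apply Cmod_triangle. rewrite !Cmod_mult, Cmod_psi.
  assert (0 <= X) by (unfold X; repeat apply Rmult_le_pos; apply pos_INR).
  assert (INR B * X + X = (INR B * INR B + INR B) * INR (Mk m l) * INR (Mk m k)) by (unfold X; ring).
  rewrite <- H0. apply Rplus_le_compat. apply Rmult_le_compat; auto; apply Cmod_ge_0. lra. Qed.

Lemma abel_id (w : nat -> R) (d : nat -> C) P :
  csum (fun r => RtoC (w r) * d r)%C P =
  (csum (fun r => (RtoC (w r) - RtoC (w (S r))) * csum d (S r)) P + RtoC (w P) * csum d P)%C.
Proof. induction P. simpl. ring. cbn [csum]. rewrite IHP. cbn [csum]. ring. Qed.

Lemma abel (w : nat -> R) (d : nat -> C) P Mb : (forall r, w (S r) <= w r) -> (forall r, 0 <= w r) ->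
  (forall p, (p <= P)%nat -> Cmod (csum d p) <= Mb) ->
  Cmod (csum (fun r => RtoC (w r) * d r)%C P) <= w 0%nat * Mb.
Proof. intros Hw Hw0 HF. rewrite abel_id.
  assert (HM : 0 <= Mb) by (specialize (HF 0%nat (Nat.le_0_l _)); simpl in HF; rewrite Cmod_0 in HF; auto).
  assert (forall P', (P' <= P)%nat -> Cmod (csum (fun r => (RtoC (w r) - RtoC (w (S r))) * csum d (S r))%C P') <= (w 0%nat - w P') * Mb).
  { induction P'; intros. simpl. rewrite Cmod_0. nra.
    cbn [csum]. eapply Rle_trans. apply Cmod_triangle. rewrite Cmod_mult, <- RtoC_minus, Cmod_R.
    rewrite Rabs_pos_eq by (specialize (Hw P'); lra).
    assert (Cmod (csum d (S P')) <= Mb) by (apply HF; lia).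
    pose proof (IHP' ltac:(lia)). specialize (Hw P').
    assert ((w P' - w (S P')) * Cmod (csum d (S P')) <= (w P' - w (S P')) * Mb) by (apply Rmult_le_compat_l; lra).
    cbn [csum] in *. nra. }
  eapply Rle_trans. apply Cmod_triangle. rewrite Cmod_mult, Cmod_R, Rabs_pos_eq by auto.
  specialize (H P (Nat.le_refl _)). assert (Cmod (csum d P) <= Mb) by auto.
  assert (w P * Cmod (csum d P) <= w P * Mb) by (apply Rmult_le_compat_l; auto). nra. Qed.

Lemma q_mono (q : nat -> R) (hq : forall k, q k <= q (S k)) i j : (i <= j)%nat -> q i <= q j.
Proof. intros H. induction H. lra. specialize (hq m). lra. Qed.

Lemma sum_lower (q : nat -> R) (hq : forall k, q k <= q (S k)) u M :
  INR M * q u <= sumR q (u + M) - sumR q u.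
Proof. induction M. rewrite Nat.add_0_r. simpl. lra.
  rewrite Nat.add_succ_r. simpl sumR. rewrite S_INR. pose proof (q_mono q hq u (u + M) ltac:(lia)). lra. Qed.

Lemma sumR_nonneg (q : nat -> R) (hq0 : forall k, 0 <= q k) n : 0 <= sumR q n.
Proof. induction n; simpl. lra. specialize (hq0 n). lra. Qed.

Lemma block_bound m (hm : forall k, (2 <= m k)%nat) B (hB : forall k, (m k <= B)%nat)
  N k l z (q : nat -> R) (hq : forall k, q k <= q (S k)) (hq0 : forall k, 0 <= q k) :
  (k < l)%nat -> (l <= N)%nat -> (0 < z k < m k)%nat ->
  ((l < N)%nat -> (0 < z l < m l)%nat) ->
  forall a P u, (P <= Mk m N)%nat -> (P <= S u)%nat ->
  Cmod (csum (fun i => RtoC (q (u - i)%nat) * Dc m (a * Mk m N + i) z)%C P)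
   <= q u * ((INR B * INR B + INR B) * INR (Mk m l) * INR (Mk m k)).
Proof. intros Hkl HlN Hzk Hzl a P u HP HPu.
  assert (HD0 : Dc m (Mk m N) z = RtoC 0) by (apply (D_M_zero m hm k); auto; lia).
  rewrite (csum_ext _ (fun i => psi m (a * Mk m N) z * (RtoC (q (u - i)%nat) * Dc m i z))%C).
  2: { intros. rewrite D_shift by (auto; lia). ring. }
  rewrite csum_scal, Cmod_mult, Cmod_psi, Rmult_1_l.
  replace (q u) with ((fun r => q (u - r)%nat) 0%nat) by (simpl; rewrite Nat.sub_0_r; auto).
  apply (abel (fun r => q (u - r)%nat) (fun i => Dc m i z)).
  - intros. apply q_mono; auto; lia.
  - auto.
  - intros. apply (F_bound m hm B hB N k l z); auto; lia. Qed.

Lemma T_bound m (hm : forall k, (2 <= m k)%nat) B (hB : forall k, (m k <= B)%nat)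
  N k l z (q : nat -> R) (hq : forall k, q k <= q (S k)) (hq0 : forall k, 0 <= q k) :
  (k < l)%nat -> (l <= N)%nat -> (0 < z k < m k)%nat ->
  ((l < N)%nat -> (0 < z l < m l)%nat) ->
  forall n u a, (u < n)%nat ->
  INR (Mk m N) * Cmod (csum (fun i => RtoC (q (u - i)%nat) * Dc m (a * Mk m N + i) z)%C (S u))
   <= ((INR B * INR B + INR B) * INR (Mk m l) * INR (Mk m k)) * sumR q (u + Mk m N).
Proof. intros Hkl HlN Hzk Hzl n. set (Cf := (INR B * INR B + INR B) * INR (Mk m l) * INR (Mk m k)).
  assert (HCf : 0 <= Cf) by (unfold Cf; pose proof (pos_INR B); pose proof (pos_INR (Mk m l));
     pose proof (pos_INR (Mk m k)); repeat apply Rmult_le_pos; nra).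
  pose proof (Mk_pos m hm N) as HM.
  assert (HMR : 0 <= INR (Mk m N)) by apply pos_INR.
  induction n; intros u a Hu. lia.
  destruct (Nat.lt_ge_cases u (Mk m N)) as [Hlt|Hge].
  - pose proof (block_bound m hm B hB N k l z q hq hq0 Hkl HlN Hzk Hzl a (S u) u ltac:(lia) ltac:(lia)) as HB1.
    fold Cf in HB1. pose proof (sum_lower q hq u (Mk m N)). pose proof (sumR_nonneg q hq0 u).
    assert (INR (Mk m N) * Cmod (csum (fun i => RtoC (q (u - i)%nat) * Dc m (a * Mk m N + i) z)%C (S u))
            <= INR (Mk m N) * (q u * Cf)) by (apply Rmult_le_compat_l; auto).
    nra.
  - replace (S u) with (Mk m N + S (u - Mk m N))%nat by lia. rewrite csum_split.
    rewrite (csum_ext (fun i => RtoC (q (u - (Mk m N + i))%nat) * Dc m (a * Mk m N + (Mk m N + i)) z)%C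
                      (fun i => RtoC (q (u - Mk m N - i)%nat) * Dc m (S a * Mk m N + i) z)%C).
    2: { intros. f_equal. f_equal. f_equal. lia. f_equal. simpl. lia. }
    pose proof (block_bound m hm B hB N k l z q hq hq0 Hkl HlN Hzk Hzl a (Mk m N) u ltac:(lia) ltac:(lia)) as HB1.
    fold Cf in HB1.
    pose proof (IHn (u - Mk m N)%nat (S a) ltac:(lia)) as IH.
    replace (u - Mk m N + Mk m N)%nat with u in IH by lia.
    pose proof (sum_lower q hq u (Mk m N)).
    eapply Rle_trans. apply Rmult_le_compat_l. auto. apply Cmod_triangle.
    assert (INR (Mk m N) * Cmod (csum (fun i => RtoC (q (u - i)%nat) * Dc m (a * Mk m N + i) z)%C (Mk m N))
            <= INR (Mk m N) * (q u * Cf)) by (apply Rmult_le_compat_l; auto).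
    nra. Qed.

Lemma fst_csum (f : nat -> C) n : fst (csum f n) = sumR (fun i => fst (f i)) n.
Proof. induction n; simpl; auto. rewrite IHn; auto. Qed.
Lemma snd_csum (f : nat -> C) n : snd (csum f n) = sumR (fun i => snd (f i)) n.
Proof. induction n; simpl; auto. rewrite IHn; auto. Qed.

Lemma sumR_le f g n : (forall i, (i < n)%nat -> f i <= g i) -> sumR f n <= sumR g n.
Proof. induction n; simpl; intros. lra. assert (f n <= g n) by (apply H; lia).
  assert (sumR f n <= sumR g n) by (apply IHn; intros; apply H; lia). lra. Qed.

Lemma sumR_split f a b : sumR f (a + b) = sumR f a + sumR (fun i => f (a + i)%nat) b.
Proof. induction b; simpl. rewrite Nat.add_0_r. lra. rewrite Nat.add_succ_r; simpl. rewrite IHb. lra. Qed.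

Lemma K_pointwise m (hm : forall k, (2 <= m k)%nat) B (hB : forall k, (m k <= B)%nat)
  (q : nat -> R) (hq0 : forall k, 0 <= q k) (hq : forall k, q k <= q (S k)) (hq00 : 0 < q 0%nat)
  N n k l z : (Mk m N <= n)%nat -> (k < l)%nat -> (l <= N)%nat -> (0 < z k < m k)%nat ->
  ((l < N)%nat -> (0 < z l < m l)%nat) ->
  cabs (K_re m q N n z) (K_im m q N n z)
   <= (INR B * INR B + INR B) * INR (Mk m l) * INR (Mk m k) / INR (Mk m N).
Proof. intros HMn Hkl HlN Hzk Hzl.
  set (M := Mk m N). pose proof (Mk_pos m hm N) as HM. fold M in HM, HMn.
  set (S0 := csum (fun i => RtoC (q (n - M - i)%nat) * Dc m (1 * M + i) z)%C (S (n - M))).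
  assert (Hre : K_re m q N n z = / Qn q n * fst S0).
  { unfold K_re, S0, sum_from_to. f_equal. rewrite fst_csum. fold M.
    replace (S n - M)%nat with (S (n - M)) by lia. apply sumR_ext. intros i _.
    replace (n - M - i)%nat with (n - (M + i))%nat by lia. replace (1 * M + i)%nat with (M + i)%nat by lia.
    unfold Dc, D_re. simpl. rewrite fst_csum. unfold psi, cexp. simpl. ring. }
  assert (Him : K_im m q N n z = / Qn q n * snd S0).
  { unfold K_im, S0, sum_from_to. f_equal. rewrite snd_csum. fold M.
    replace (S n - M)%nat with (S (n - M)) by lia. apply sumR_ext. intros i _.
    replace (n - M - i)%nat with (n - (M + i))%nat by lia. replace (1 * M + i)%nat with (M + i)%nat by lia.
    unfold Dc, D_im. simpl. rewrite snd_csum, fst_csum. unfold psi, cexp. simpl. ring. }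
  assert (HQ : 0 < Qn q n).
  { unfold Qn. pose proof (sum_lower q hq 0 n). simpl in H. replace (0 + n)%nat with n in H by lia.
    assert (1 <= INR n) by (apply (le_INR 1); lia). nra. }
  assert (Hc : cabs (K_re m q N n z) (K_im m q N n z) = / Qn q n * Cmod S0).
  { rewrite Hre, Him. unfold cabs, Cmod.
    replace (/ Qn q n * fst S0 * (/ Qn q n * fst S0) + / Qn q n * snd S0 * (/ Qn q n * snd S0))
      with ((/ Qn q n)² * (fst S0 ^ 2 + snd S0 ^ 2)) by (unfold Rsqr; ring).
    rewrite sqrt_mult. rewrite sqrt_Rsqr. auto.
    left; apply Rinv_0_lt_compat; auto. apply Rle_0_sqr.
    pose proof (pow2_ge_0 (fst S0)). pose proof (pow2_ge_0 (snd S0)). lra. }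
  rewrite Hc.
  pose proof (T_bound m hm B hB N k l z q hq hq0 Hkl HlN Hzk Hzl (S (n - M)) (n - M)%nat 1%nat ltac:(lia)) as HT.
  fold M S0 in HT. replace (n - M + M)%nat with n in HT by lia. fold (Qn q n) in HT.
  set (Cf := (INR B * INR B + INR B) * INR (Mk m l) * INR (Mk m k)) in *.
  assert (HMR : 0 < INR M) by (apply lt_0_INR; auto).
  apply (Rmult_le_reg_l (INR M * Qn q n)). nra.
  replace (INR M * Qn q n * (/ Qn q n * Cmod S0)) with (INR M * Cmod S0) by (field; lra).
  replace (INR M * Qn q n * (Cf / INR M)) with (Cf * Qn q n) by (field; lra). auto. Qed.

Lemma mod_digits m (hm : forall k, (2 <= m k)%nat) N s :
  (forall j, (j < N)%nat -> digit m s j = 0%nat) -> (s mod Mk m N = 0)%nat.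
Proof. induction N; intros H. exact (Nat.mod_1_r s).
  simpl. rewrite (Nat.mul_comm (m N) (Mk m N)), Nat.Div0.mod_mul_r. rewrite IHN by (intros; apply H; lia).
  specialize (H N ltac:(lia)). unfold digit in H. rewrite H. lia. Qed.

Lemma count_mult (g : nat -> R) V M P : (0 < M)%nat ->
  (forall s, g s = if Nat.eqb (s mod M) 0 then V else 0) ->
  sumR g (P * M) = INR P * V.
Proof. intros HM Hg. induction P. simpl. lra.
  replace (S P * M)%nat with (P * M + M)%nat by lia. rewrite sumR_split, IHP, S_INR.
  rewrite (sumR_ext _ (fun i => if Nat.eqb i 0 then V else 0)).
  rewrite (sumR_single _ 0%nat). simpl. ring.
  intros i Hi. destruct i; [lia|auto]. auto.
  intros i Hi. rewrite Hg. replace (P * M + i)%nat with (i + P * M)%nat by lia.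
  rewrite Nat.Div0.mod_add. rewrite Nat.mod_small by auto. auto. Qed.

Lemma inIN_zero N t : inIN N t = true -> forall j, (j < N)%nat -> t j = 0%nat.
Proof. unfold inIN. rewrite forallb_forall. intros H j Hj. apply Nat.eqb_eq. apply H.
  apply in_seq. lia. Qed.

Lemma gsub_low m x t j : t j = 0%nat -> (x j < m j)%nat -> gsub m x t j = x j.
Proof. intros H1 H2. unfold gsub. rewrite H1, Nat.sub_0_r.
  replace (x j + m j)%nat with (x j + 1 * m j)%nat by lia. rewrite Nat.Div0.mod_add.
  apply Nat.mod_small; auto. Qed.

Theorem mainTheorem7 :
  forall (m : nat -> nat),
    (forall k, (2 <= m k)%nat) ->
    (exists B : nat, forall k, (m k <= B)%nat) ->
  forall (q : nat -> R),
    (forall k, 0 <= q k) ->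
    (forall k, q k <= q (S k)) ->
    0 < q 0%nat ->
  exists c : R, 0 < c /\
    forall (N n k l : nat) (x : nat -> nat),
      (Mk m N <= n)%nat ->
      (k < l)%nat -> (l <= N)%nat ->
      inG m x -> in_INkl N k l x ->
      haar_int_cyl m (S n)
        (fun t => if inIN N t
                  then cabs (K_re m q N n (gsub m x t)) (K_im m q N n (gsub m x t))
                  else 0)
      <= c * INR (Mk m l) * INR (Mk m k) / (INR (Mk m N) * INR (Mk m N)).
Proof.
  intros m hm [B hB] q hq0 hq hq00.
  assert (HB2 : (2 <= B)%nat) by (specialize (hm 0%nat); specialize (hB 0%nat); lia).
  assert (HBR : 2 <= INR B) by (apply (le_INR 2); auto).
  exists (INR B * INR B + INR B). split. nra.
  intros N n k l x HMn Hkl HlN HxG [Hx0 [Hxk [Hxmid Hxl]]].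
  set (c := INR B * INR B + INR B).
  set (V := c * INR (Mk m l) * INR (Mk m k) / INR (Mk m N)).
  pose proof (Mk_pos m hm N) as HM. pose proof (Mk_gt m hm N) as HNM.
  assert (HMR : 0 < INR (Mk m N)) by (apply lt_0_INR; auto).
  assert (HV : 0 <= V).
  { unfold V, c. pose proof (pos_INR (Mk m l)). pose proof (pos_INR (Mk m k)).
    apply Rmult_le_pos. repeat apply Rmult_le_pos; nra. left; apply Rinv_0_lt_compat; auto. }
  destruct (Mk_split_le m N (S n)) as [P HP]; [lia|].
  unfold haar_int_cyl.
  eapply Rle_trans.
  { apply Rmult_le_compat_l. left; apply Rinv_0_lt_compat, lt_0_INR, Mk_pos; auto.
    apply (sumR_le _ (fun s => if Nat.eqb (s mod Mk m N) 0 then V else 0)).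
    intros s _. destruct (inIN N (fun k0 => digit m s k0)) eqn:E.
    - pose proof (inIN_zero N _ E) as Hz.
      rewrite (mod_digits m hm N s) by (intros; apply Hz; auto). rewrite Nat.eqb_refl.
      apply (K_pointwise m hm B hB q hq0 hq hq00 N n k l); auto.
      + rewrite gsub_low by (auto; apply Hz; lia). split; [lia| apply HxG].
      + intros HlN'. rewrite gsub_low by (auto; apply Hz; lia).
        assert (Nat.ltb l N = true) by (apply Nat.ltb_lt; auto). rewrite H in Hxl.
        split; [lia|apply HxG].
    - destruct (Nat.eqb _ 0); lra. }
  rewrite HP. replace (Mk m N * P)%nat with (P * Mk m N)%nat by lia.
  rewrite (count_mult _ V (Mk m N) P); auto.
  assert (HPp : (0 < P)%nat) by (destruct P; [rewrite Nat.mul_0_r in HP; pose proof (Mk_pos m hm (S n)); lia | lia]).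
  assert (0 < INR P) by (apply lt_0_INR; auto).
  rewrite mult_INR. unfold V. right. field. lra.
Qed.
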